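(* Let $h$ be a positive integer, $\alpha=\dfrac{h+\sqrt{h^2+4}}{2}$, and define $q_{-1}=0$, $q_0=1$, $q_{k+1}=hq_k+q_{k-1}$ for $k\ge0$. Then for integers $n\ge1$: $$\lceil\alpha n\rceil-\alpha n=\begin{cases} j/\alpha^{2k} & \text{if } n=jq_{2k-1},\ k\ge1,\ 1\le j<\alpha^{2k},\\ (\alpha-1)/\alpha^{2k+1} & \text{if } n=q_{2k-1}+q_{2k},\ k\ge0,\\ (\alpha+1)/\alpha^{2k+2} & \text{if } n=q_{2k+1}-q_{2k},\ k\ge0,\end{cases}$$ and $n(\lceil\alpha n\rceil-\alpha n)\ge1$ for all other integers $n\ge1$ (i.e. all $n\ge1$ not of any of these three forms).
   Context: The numbers $q_k$ are the denominators of the convergents of the regular continued fraction $\alpha=[h;h,h,\dots]$. *)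

(* Defs.v *)
From Stdlib Require Import Reals Lra Lia.
Open Scope R_scope.

Definition alpha (h : nat) : R := (INR h + sqrt (INR h ^ 2 + 4)) / 2.

(* Shifted denominators: qs h k = q_{k-1}, i.e. qs 0 = q_{-1} = 0, qs 1 = q_0 = 1,
   q_{k+1} = h q_k + q_{k-1}. *)
Fixpoint qs (h : nat) (k : nat) : nat :=
  match k with
  | O => 0%nat
  | S k' => match k' with
            | O => 1%nat
            | S k'' => (h * qs h k' + qs h k'')%nat
            end
  end.

Definition q (h : nat) (m : Z) : nat := qs h (Z.to_nat (m + 1)).

Definition Rceil (x : R) : R := IZR (- Int_part (- x)).

(* Main.v *)
Require Import Defs.
From Stdlib Require Import Reals Lra Lia ZArith.
Open Scope R_scope.

Lemma qsS h n : qs h (S (S n)) = (h * qs h (S n) + qs h n)%nat.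
Proof. reflexivity. Qed.

Lemma qsZ h n : Z.of_nat (qs h (S (S n))) = (Z.of_nat h * Z.of_nat (qs h (S n)) + Z.of_nat (qs h n))%Z.
Proof. rewrite qsS. lia. Qed.

Lemma q0 h : qs h (2*0) = 0%nat. Proof. reflexivity. Qed.
Lemma q1 h : qs h (2*0+1) = 1%nat. Proof. reflexivity. Qed.
Lemma q2 h : qs h (2*0+2) = h. Proof. simpl. lia. Qed.
Lemma q3 h : qs h (2*0+3) = (h*h+1)%nat. Proof. simpl. lia. Qed.

Definition PP (h : nat) (a b : Z) : Prop := exists t : nat,
 (exists j : Z, (1 <= j)%Z /\ a = (j * Z.of_nat (qs h (2*t+1)))%Z /\ b = (j * Z.of_nat (qs h (2*t)))%Z) \/
 (a = (Z.of_nat (qs h (2*t+1)) + Z.of_nat (qs h (2*t+2)))%Z /\ b = (Z.of_nat (qs h (2*t)) + Z.of_nat (qs h (2*t+1)))%Z) \/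
 (a = (Z.of_nat (qs h (2*t+3)) - Z.of_nat (qs h (2*t+2)))%Z /\ b = (Z.of_nat (qs h (2*t+2)) - Z.of_nat (qs h (2*t+1)))%Z).

Lemma PP_step h a b :
  PP h (a - Z.of_nat h * b)%Z ((1 + Z.of_nat h * Z.of_nat h) * b - Z.of_nat h * a)%Z -> PP h a b.
Proof.
  intros [t Ht]. exists (S t).
  set (hz := Z.of_nat h) in *.
  assert (E0 : Z.of_nat (qs h (2*t+2)) = (hz * Z.of_nat (qs h (2*t+1)) + Z.of_nat (qs h (2*t)))%Z).
  { replace (2*t+2)%nat with (S (S (2*t))) by lia. replace (2*t+1)%nat with (S (2*t)) by lia. apply qsZ. }
  assert (E1 : Z.of_nat (qs h (2*t+3)) = (hz * Z.of_nat (qs h (2*t+2)) + Z.of_nat (qs h (2*t+1)))%Z).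
  { replace (2*t+3)%nat with (S (S (2*t+1))) by lia. replace (2*t+2)%nat with (S (2*t+1)) by lia. apply qsZ. }
  assert (E2 : Z.of_nat (qs h (2*t+4)) = (hz * Z.of_nat (qs h (2*t+3)) + Z.of_nat (qs h (2*t+2)))%Z).
  { replace (2*t+4)%nat with (S (S (2*t+2))) by lia. replace (2*t+3)%nat with (S (2*t+2)) by lia. apply qsZ. }
  assert (E3 : Z.of_nat (qs h (2*t+5)) = (hz * Z.of_nat (qs h (2*t+4)) + Z.of_nat (qs h (2*t+3)))%Z).
  { replace (2*t+5)%nat with (S (S (2*t+3))) by lia. replace (2*t+4)%nat with (S (2*t+3)) by lia. apply qsZ. }
  replace (2 * S t + 3)%nat with (2*t+5)%nat by lia.
  replace (2 * S t + 2)%nat with (2*t+4)%nat by lia.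
  replace (2 * S t + 1)%nat with (2*t+3)%nat by lia.
  replace (2 * S t)%nat with (2*t+2)%nat by lia.
  assert (Hb : b = (hz * (a - hz * b) + ((1 + hz*hz)*b - hz*a))%Z) by ring.
  assert (Ha : a = (hz * b + (a - hz*b))%Z) by ring.
  set (Q0 := Z.of_nat (qs h (2*t))) in *.
  set (Q1 := Z.of_nat (qs h (2*t+1))) in *.
  set (Q2 := Z.of_nat (qs h (2*t+2))) in *.
  set (Q3 := Z.of_nat (qs h (2*t+3))) in *.
  set (Q4 := Z.of_nat (qs h (2*t+4))) in *.
  set (Q5 := Z.of_nat (qs h (2*t+5))) in *.
  destruct Ht as [[j [Hj [H1 H2]]] | [[H1 H2] | [H1 H2]]].
  - left. exists j. rewrite H1, H2 in Hb. rewrite H1 in Ha.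
    split; [exact Hj|]. split.
    + rewrite Ha, Hb, ?E3, ?E2, ?E1, ?E0. ring.
    + rewrite Hb, ?E3, ?E2, ?E1, ?E0. ring.
  - right; left. rewrite H1, H2 in Hb. rewrite H1 in Ha. split.
    + rewrite Ha, Hb, ?E3, ?E2, ?E1, ?E0. ring.
    + rewrite Hb, ?E3, ?E2, ?E1, ?E0. ring.
  - right; right. rewrite H1, H2 in Hb. rewrite H1 in Ha. split.
    + rewrite Ha, Hb, ?E3, ?E2, ?E1, ?E0. ring.
    + rewrite Hb, ?E3, ?E2, ?E1, ?E0. ring.
Qed.

Lemma terminal (h a b : Z) : (1 <= h)%Z -> (1 <= b)%Z -> (a > h*b)%Z -> ((1+h*h)*b - h*a < 0)%Z ->
  (a*a - h*a*b - b*b <= h+1)%Z -> ((3 <= h)%Z -> (a*a - h*a*b - b*b <= h)%Z) ->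
  (a = h+1 /\ b = 1)%Z \/ (a = h*h - h + 1 /\ b = h - 1)%Z.
Proof.
  intros Hh Hb Hab Hb' HK HK3.
  set (c := (a - h*b)%Z).
  assert (Ea : a = (h*b + c)%Z) by (unfold c; ring).
  rewrite Ea in HK, HK3, Hb'.
  assert (Hc : (1 <= c)%Z) by (unfold c; lia).
  assert (Hhc : (b < h*c)%Z) by nia.
  assert (EK : ((h*b+c)*(h*b+c) - h*(h*b+c)*b - b*b = b*(h*c-b) + c*c)%Z) by ring.
  rewrite EK in HK, HK3.
  destruct (Z.eq_dec c 1) as [Hc1|Hc1].
  - rewrite Hc1 in *. 
    destruct (Z.eq_dec b 1) as [E|E]; [left; lia|].
    destruct (Z.eq_dec b (h-1)) as [E'|E']; [right; split; [rewrite Ea; subst b; ring| lia]|].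
    exfalso.
    assert (H2 : (0 <= (b-2)*(h-b-2))%Z) by (apply Z.mul_nonneg_nonneg; lia).
    assert (3 <= h)%Z by lia. specialize (HK3 H). nia.
  - exfalso.
    assert (H2 : (0 <= (b-1)*(h*c-b-1))%Z) by (apply Z.mul_nonneg_nonneg; lia).
    assert (h*c >= 2*h)%Z by nia.
    nia.
Qed.

Lemma descent (h : nat) : (1 <= h)%nat -> forall N : nat, forall a b : Z,
  (0 <= b)%Z -> (b <= Z.of_nat N)%Z -> (1 <= a)%Z ->
  (0 <= a*a - Z.of_nat h*a*b - b*b)%Z -> (a*a - Z.of_nat h*a*b - b*b <= Z.of_nat h + 1)%Z ->
  ((3 <= Z.of_nat h)%Z -> (a*a - Z.of_nat h*a*b - b*b <= Z.of_nat h)%Z) -> PP h a b.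
Proof.
  intros Hh N. induction N as [|N IH]; intros a b Hb0 HbN Ha HK0 HK HK3.
  - assert (b = 0%Z) by lia. subst b. exists 0%nat. left. exists a. rewrite q0, q1. lia.
  - destruct (Z.eq_dec b 0) as [Eb|Eb].
    { subst b. exists 0%nat. left. exists a. rewrite q0, q1. lia. }
    set (hz := Z.of_nat h) in *.
    assert (Hhz : (1 <= hz)%Z) by (unfold hz; lia).
    assert (Hab : (a > hz*b)%Z).
    { assert (a*(a - hz*b) >= b*b)%Z by nia. nia. }
    destruct (Z_lt_le_dec ((1+hz*hz)*b - hz*a) 0) as [Hneg|Hpos].
    + destruct (terminal hz a b Hhz ltac:(lia) Hab Hneg HK HK3) as [[E1 E2]|[E1 E2]].
      * exists 0%nat. right; left. rewrite q0, q1, q2. unfold hz in *. lia.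
      * exists 0%nat. right; right. rewrite q1, q2, q3. rewrite E1, E2. unfold hz. lia.
    + apply PP_step. fold hz. apply IH.
      * exact Hpos.
      * nia.
      * lia.
      * assert (Ei : ((a - hz*b)*(a - hz*b) - hz*(a-hz*b)*((1+hz*hz)*b - hz*a) - ((1+hz*hz)*b - hz*a)*((1+hz*hz)*b - hz*a) = a*a - hz*a*b - b*b)%Z) by ring.
        rewrite Ei; lia.
      * assert (Ei : ((a - hz*b)*(a - hz*b) - hz*(a-hz*b)*((1+hz*hz)*b - hz*a) - ((1+hz*hz)*b - hz*a)*((1+hz*hz)*b - hz*a) = a*a - hz*a*b - b*b)%Z) by ring.
        rewrite Ei; lia.
      * assert (Ei : ((a - hz*b)*(a - hz*b) - hz*(a-hz*b)*((1+hz*hz)*b - hz*a) - ((1+hz*hz)*b - hz*a)*((1+hz*hz)*b - hz*a) = a*a - hz*a*b - b*b)%Z) by ring.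
        rewrite Ei; lia.
Qed.
Lemma alpha_sq h : alpha h * alpha h = INR h * alpha h + 1.
Proof.
  unfold alpha. set (s := sqrt (INR h ^ 2 + 4)).
  assert (Hs : s * s = INR h ^ 2 + 4) by (apply sqrt_sqrt; pose proof (pos_INR h); nra).
  nra.
Qed.

Lemma alpha_gt h : INR h < alpha h.
Proof.
  unfold alpha. set (s := sqrt (INR h ^ 2 + 4)).
  assert (Hs : s * s = INR h ^ 2 + 4) by (apply sqrt_sqrt; pose proof (pos_INR h); nra).
  assert (0 <= s) by apply sqrt_pos. pose proof (pos_INR h). nra.
Qed.

Lemma Rceil_spec (c : Z) (x : R) : 0 <= x < 1 -> Rceil (IZR c - x) = IZR c.
Proof.
  intros [H0 H1]. unfold Rceil, Int_part.
  assert (E : (- c + 1)%Z = up (- (IZR c - x))).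
  { apply tech_up; rewrite plus_IZR, opp_IZR; lra. }
  rewrite <- E. f_equal. ring.
Qed.

Section A.
Variable h : nat.
Hypothesis hpos : (1 <= h)%nat.
Let a := alpha h.

Lemma a_gt1 : 1 < a.
Proof. pose proof (alpha_gt h). apply le_INR in hpos. simpl in hpos. unfold a. lra. Qed.

Lemma e_closed t : (INR (qs h (S t)) - a * INR (qs h t)) * a ^ t = (-1) ^ t.
Proof.
  induction t as [|t IH].
  - simpl. ring.
  - rewrite qsS, plus_INR, mult_INR.
    set (u := INR (qs h (S t))) in *. set (v := INR (qs h t)) in *.
    pose proof (alpha_sq h) as Ha. fold a in Ha.
    assert (E : (INR h * u + v - a * u) * a = - (u - a * v)).
    { assert (a*a*u = (INR h * a + 1) * u) by (rewrite Ha; ring). nra. }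
    simpl pow. rewrite <- IH.
    replace ((INR h * u + v - a * u) * (a * a ^ t)) with (((INR h * u + v - a * u) * a) * a ^ t) by ring.
    rewrite E. ring.
Qed.

Lemma apow_pos n : 0 < a ^ n.
Proof. apply pow_lt. pose proof a_gt1. lra. Qed.

Lemma apow_ge1 n : 1 <= a ^ n.
Proof. apply pow_R1_Rle. pose proof a_gt1. lra. Qed.

Lemma e_even k : INR (qs h (2*k+1)) - a * INR (qs h (2*k)) = / a ^ (2*k).
Proof.
  pose proof (e_closed (2*k)) as H. rewrite pow_1_even in H.
  replace (2*k+1)%nat with (S (2*k)) by lia.
  pose proof (apow_pos (2*k)).
  apply (Rmult_eq_reg_r (a ^ (2*k))); [|lra]. rewrite H. field. lra.
Qed.

Lemma e_odd k : INR (qs h (2*k+2)) - a * INR (qs h (2*k+1)) = - / a ^ (2*k+1).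
Proof.
  pose proof (e_closed (S (2*k))) as H. rewrite pow_1_odd in H.
  replace (2*k+2)%nat with (S (S (2*k))) by lia.
  replace (2*k+1)%nat with (S (2*k)) by lia.
  pose proof (apow_pos (S (2*k))).
  apply (Rmult_eq_reg_r (a ^ (S (2*k)))); [|lra]. rewrite H. field. lra.
Qed.

Lemma e_even2 k : INR (qs h (2*k+3)) - a * INR (qs h (2*k+2)) = / a ^ (2*k+2).
Proof.
  pose proof (e_even (S k)) as H.
  replace (2 * S k + 1)%nat with (2*k+3)%nat in H by lia.
  replace (2 * S k)%nat with (2*k+2)%nat in H by lia. exact H.
Qed.

End A.

Lemma div_lt1 (x y : R) : 0 < y -> 0 <= x < y -> 0 <= x / y < 1.
Proof.
  intros Hy [H0 H1]. unfold Rdiv. split.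
  - apply Rmult_le_pos; [lra| left; apply Rinv_0_lt_compat; lra].
  - replace 1 with (y * / y) by (field; lra). apply Rmult_lt_compat_r; [apply Rinv_0_lt_compat|]; lra.
Qed.

Theorem lemma4 (h : nat) (hpos : (1 <= h)%nat) (n : nat) (hn : (1 <= n)%nat) :
  let a := alpha h in
  let d := Rceil (a * INR n) - a * INR n in
  (forall (k j : nat), (1 <= k)%nat -> (1 <= j)%nat -> INR j < a ^ (2 * k) ->
     n = (j * q h (2 * Z.of_nat k - 1))%nat -> d = INR j / a ^ (2 * k)) /\
  (forall k : nat,
     n = (q h (2 * Z.of_nat k - 1) + q h (2 * Z.of_nat k))%nat ->
     d = (a - 1) / a ^ (2 * k + 1)) /\
  (forall k : nat,
     Z.of_nat n = (Z.of_nat (q h (2 * Z.of_nat k + 1)) - Z.of_nat (q h (2 * Z.of_nat k)))%Z ->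
     d = (a + 1) / a ^ (2 * k + 2)) /\
  ((~ exists k j : nat, (1 <= k)%nat /\ (1 <= j)%nat /\ INR j < a ^ (2 * k) /\
        n = (j * q h (2 * Z.of_nat k - 1))%nat) ->
   (~ exists k : nat, n = (q h (2 * Z.of_nat k - 1) + q h (2 * Z.of_nat k))%nat) ->
   (~ exists k : nat, Z.of_nat n =
        (Z.of_nat (q h (2 * Z.of_nat k + 1)) - Z.of_nat (q h (2 * Z.of_nat k)))%Z) ->
   INR n * d >= 1).
Proof.
  cbv zeta.
  pose proof (e_even h hpos) as Ev. pose proof (e_odd h hpos) as Od.
  pose proof (e_even2 h hpos) as Ev2. pose proof (apow_pos h hpos) as Ap.
  pose proof (apow_ge1 h hpos) as Ag. pose proof (a_gt1 h hpos) as A1.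
  pose proof (alpha_sq h) as Ha2. pose proof (alpha_gt h) as Ah.
  set (a := alpha h) in *.
  assert (Qm1 : forall k, q h (2*Z.of_nat k - 1) = qs h (2*k)) by (intro k; unfold q; f_equal; lia).
  assert (Q0 : forall k, q h (2*Z.of_nat k) = qs h (2*k+1)) by (intro k; unfold q; f_equal; lia).
  assert (Q1 : forall k, q h (2*Z.of_nat k + 1) = qs h (2*k+2)) by (intro k; unfold q; f_equal; lia).
  assert (hR : 1 <= INR h) by (apply le_INR in hpos; simpl in hpos; lra).
  split; [|split; [|split]].
  - intros k j Hk Hj Hja Hn. rewrite Qm1 in Hn.
    assert (Ey : a * INR n = IZR (Z.of_nat (j * qs h (2*k+1))) - INR j / a^(2*k)).
    { rewrite Hn, <- INR_IZR_INZ, !mult_INR. specialize (Ev k). unfold Rdiv. rewrite <- Ev. ring. }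
    rewrite Ey, Rceil_spec. ring.
    apply div_lt1; [apply Ap|]. split; [apply pos_INR|exact Hja].
  - intros k Hn. rewrite Qm1, Q0 in Hn.
    assert (Hp : a^(2*k+1) = a^(2*k)*a) by (rewrite pow_add; simpl; ring).
    specialize (Ev k); specialize (Od k). specialize (Ap (2*k)%nat).
    rewrite Hp in Od |- *.
    assert (Ey : a * INR n = IZR (Z.of_nat (qs h (2*k+1) + qs h (2*k+2))) - (a - 1) / (a^(2*k)*a)).
    { rewrite Hn, <- INR_IZR_INZ, !plus_INR.
      assert (E1 : a * INR (qs h (2*k)) = INR (qs h (2*k+1)) - / a^(2*k)) by lra.
      assert (E2 : a * INR (qs h (2*k+1)) = INR (qs h (2*k+2)) + / (a^(2*k)*a)) by lra.
      replace (a * (INR (qs h (2*k)) + INR (qs h (2*k+1)))) with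
        (a * INR (qs h (2*k)) + a * INR (qs h (2*k+1))) by ring.
      rewrite E1, E2. field. lra. }
    rewrite Ey, Rceil_spec. ring.
    apply div_lt1; [nra|]. specialize (Ag (2*k)%nat). nra.
  - intros k Hn. rewrite Q1, Q0 in Hn.
    assert (Hp : a^(2*k+2) = a^(2*k+1)*a) by (replace (2*k+2)%nat with (S (2*k+1)) by lia; simpl; ring).
    assert (HnR : INR n = INR (qs h (2*k+2)) - INR (qs h (2*k+1))).
    { rewrite !INR_IZR_INZ, Hn, minus_IZR. reflexivity. }
    assert (Hbig : a + 1 < a^(2*k+2)).
    { destruct k as [|k].
      - destruct (Nat.eq_dec h 1) as [Eh|Eh].
        + exfalso. subst h. simpl in Hn. lia.
        + assert (2 <= INR h) by (replace 2 with (INR 2) by (simpl; ring); apply le_INR; lia).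
          assert (INR h * a >= 2 * a) by nra.
          replace (a ^ (2*0+2)) with (a*a) by (simpl; ring). lra.
      - replace (2 * S k + 2)%nat with (2*k + 4)%nat by lia. rewrite pow_add.
        specialize (Ag (2*k)%nat).
        assert (a*a >= a+1) by nra. assert (a*a*(a*a) > a+1) by nra.
        replace (a^4) with (a*a*(a*a)) by (simpl; ring).
        assert (a^(2*k) * (a*a*(a*a)) >= a*a*(a*a)) by nra. lra. }
    specialize (Ev2 k); specialize (Od k). pose proof (Ap (2*k+1)%nat).
    rewrite Hp in Ev2, Hbig |- *.
    assert (Ey : a * INR n = IZR (Z.of_nat (qs h (2*k+3)) - Z.of_nat (qs h (2*k+2))) - (a + 1) / (a^(2*k+1)*a)).
    { rewrite HnR, minus_IZR, <- !INR_IZR_INZ.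
      assert (E1 : a * INR (qs h (2*k+2)) = INR (qs h (2*k+3)) - / (a^(2*k+1)*a)) by lra.
      assert (E2 : a * INR (qs h (2*k+1)) = INR (qs h (2*k+2)) + / a^(2*k+1)) by lra.
      replace (a * (INR (qs h (2*k+2)) - INR (qs h (2*k+1)))) with
        (a * INR (qs h (2*k+2)) - a * INR (qs h (2*k+1))) by ring.
      rewrite E1, E2. field. lra. }
    rewrite Ey, Rceil_spec. ring.
    apply div_lt1; [nra|]. lra.
  - intros N1 N2 N3.
    unfold Rceil.
    set (M := (- Int_part (- (a * INR n)))%Z).
    set (x := IZR M - a * INR n).
    destruct (base_Int_part (- (a * INR n))) as [B1 B2].
    assert (EM : IZR M = - IZR (Int_part (- (a * INR n)))) by (unfold M; apply opp_IZR).
    assert (Hx0 : 0 <= x) by (unfold x; lra).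
    assert (Hx1 : x < 1) by (unfold x; lra).
    apply Rnot_lt_ge. intro Hlt. fold x in Hlt.
    destruct (Nat.eq_dec n 1) as [E1|E1].
    { apply N2. exists 0%nat. rewrite Qm1, Q0, E1. reflexivity. }
    assert (Hn2 : 2 <= INR n) by (replace 2 with (INR 2) by (simpl; ring); apply le_INR; lia).
    set (nz := Z.of_nat n). set (hz := Z.of_nat h).
    set (K := (M*M - hz*M*nz - nz*nz)%Z).
    set (s := 2*a - INR h).
    assert (Hs : s * s = INR h * INR h + 4) by (unfold s; nra).
    assert (Hs0 : 0 < s) by (unfold s; lra).
    assert (EK : IZR K = x * (x + s * INR n)).
    { unfold K. rewrite !minus_IZR, !mult_IZR. unfold nz, hz. rewrite <- !INR_IZR_INZ.
      assert (a*a*(INR n*INR n) = (INR h*a+1)*(INR n*INR n)) by (rewrite Ha2; ring).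
      unfold x, s. nra. }
    assert (Hxh : x < 1/2) by nra.
    assert (HK0 : 0 <= IZR K) by (rewrite EK; apply Rmult_le_pos; nra).
    assert (HKs : IZR K < s + 1/4) by (rewrite EK; nra).
    assert (Hs74 : s < INR h + 7/4) by nra.
    assert (HKa : (K <= hz + 1)%Z).
    { assert (K < hz + 2)%Z; [|lia]. apply lt_IZR. rewrite plus_IZR. unfold hz. rewrite <- INR_IZR_INZ. lra. }
    assert (HKb : (3 <= hz)%Z -> (K <= hz)%Z).
    { intro H3. assert (3 <= INR h) by (rewrite INR_IZR_INZ; fold hz; apply IZR_le in H3; exact H3).
      assert (s <= INR h + 3/4) by nra.
      assert (K < hz + 1)%Z; [|lia]. apply lt_IZR. rewrite plus_IZR. unfold hz. rewrite <- INR_IZR_INZ. lra. }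
    assert (HM : (1 <= M)%Z).
    { apply le_IZR. assert (a <= a * INR n) by nra. unfold x in Hx0. lra. }
    assert (HK0' : (0 <= K)%Z) by (apply le_IZR; exact HK0).
    destruct (descent h hpos n M nz ltac:(unfold nz; lia) ltac:(unfold nz; lia) HM HK0' HKa HKb)
      as [t [[j [Hj [HMe Hne]]] | [[HMe Hne] | [HMe Hne]]]].
    + destruct (Nat.eq_dec t 0) as [Et|Et].
      { subst t. rewrite q0 in Hne. unfold nz in Hne. lia. }
      apply N1. exists t, (Z.to_nat j). split; [lia|]. split; [lia|]. split.
      * rewrite INR_IZR_INZ, Z2Nat.id by lia.
        assert (HnR : INR n = IZR j * INR (qs h (2*t))).
        { rewrite !INR_IZR_INZ, <- mult_IZR. f_equal. exact Hne. }
        assert (HMR : IZR M = IZR j * INR (qs h (2*t+1))).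
        { rewrite !INR_IZR_INZ, <- mult_IZR. f_equal. exact HMe. }
        specialize (Ev t). specialize (Ap (2*t)%nat).
        assert (Ex : x = IZR j * / a^(2*t)).
        { unfold x. rewrite HMR, HnR, <- Ev. ring. }
        assert (IZR j = x * a^(2*t)) by (rewrite Ex; field; lra).
        nra.
      * rewrite Qm1. apply Nat2Z.inj. rewrite Nat2Z.inj_mul, Z2Nat.id by lia. exact Hne.
    + apply N2. exists t. rewrite Qm1, Q0. unfold nz in Hne. lia.
    + apply N3. exists t. rewrite Q1, Q0. exact Hne.
Qed.
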